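(* Let $\Gamma$ be a group and let $S$ be a $\Gamma$-graded semigroup with local units. Then there is an isomorphism of categories $\mathcal{F}_{\#}:\mathrm{Gr}\text{-}S\to \mathrm{Mod}\text{-}(S\#\Gamma)$ such that $\mathcal{T}_\alpha\circ\mathcal{F}_{\#}=\mathcal{F}_{\#}\circ\mathcal{T}_\alpha$ for every $\alpha\in\Gamma$, where on the left $\mathcal{T}_\alpha$ denotes the shift functor on $\mathrm{Mod}\text{-}(S\#\Gamma)$ and on the right the shift functor on $\mathrm{Gr}\text{-}S$.
   Context: All semigroups have a zero element $0$. $\varepsilon$ is the identity of $\Gamma$. A semigroup $S$ is $\Gamma$-graded if there is a map $\deg:S\setminus\{0\}\to\Gamma$ with $\deg(st)=\deg(s)\deg(t)$ whenever $st\neq 0$; put $S_\alpha=\deg^{-1}(\alpha)\cup\{0\}$. $S$ has local units if for each $s\in S$ there are idempotents $u,v$ with $us=s=sv$. A (pointed) left $S$-set is a set $X$ with an action $S\times X\to X$, $s(tx)=(st)x$, and a distinguished element $0_X$ with $0x=0_X$ for all $x$; it is unital if $SX=X$. An $S$-map is a function $\phi$ with $\phi(sx)=s\phi(x)$. A left $S$-set $X$ is $\Gamma$-graded if there is a map $\deg:X\setminus\{0_X\}\to\Gamma$ with $\deg(sx)=\deg(s)\deg(x)$ whenever $sx\neq 0_X$; $X_\alpha=\deg^{-1}(\alpha)\cup\{0_X\}$. $\mathrm{Mod}\text{-}T$ is the category of unital pointed left $T$-sets with $T$-maps; $\mathrm{Gr}\text{-}S$ is the category of $\Gamma$-graded unital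 pointed left $S$-sets with graded $S$-maps (those with $\phi(X_\alpha)\subseteq Y_\alpha$ for all $\alpha$). The shift functor $\mathcal{T}_\alpha$ on $\mathrm{Gr}\text{-}S$ sends $X$ to $X(\alpha)$, which is $X$ with grading $X(\alpha)_\beta=X_{\beta\alpha}$, and is the identity on morphisms. The smash product $S\#\Gamma=\{sP_\alpha : s\in S\setminus\{0\},\alpha\in\Gamma\}\cup\{0\}$ has multiplication $(sP_\alpha)(tP_\beta)=stP_\beta$ if $st\neq0$ and $t\in S_{\alpha\beta^{-1}}$, and $0$ otherwise (with $0$ absorbing). The shift functor $\mathcal{T}_\alpha$ on $\mathrm{Mod}\text{-}(S\#\Gamma)$ sends $X$ to $X(\alpha)$, which is the set $X$ with new action $(sP_\beta).x=(sP_{\beta\alpha})x$, and is the identity on morphisms. *)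

(* Defs.v *)
From Stdlib Require Import ClassicalDescription ProofIrrelevance.
Set Implicit Arguments.
Unset Strict Implicit.

Record Group := {
  gcar :> Type;
  gmul : gcar -> gcar -> gcar;
  gone : gcar;
  ginv : gcar -> gcar;
  gmulA : forall a b c, gmul a (gmul b c) = gmul (gmul a b) c;
  gmul1g : forall a, gmul gone a = a;
  gmulg1 : forall a, gmul a gone = a;
  gmulVg : forall a, gmul (ginv a) a = gone;
  gmulgV : forall a, gmul a (ginv a) = gone }.
Arguments gmul {g}. Arguments ginv {g}. Arguments gone {g}.

Lemma ginvM (G : Group) (a b : G) : ginv (gmul a b) = gmul (ginv b) (ginv a).
Proof.
  assert (H : gmul (gmul a b) (gmul (ginv b) (ginv a)) = gone).
  { rewrite <- gmulA, (gmulA b (ginv b)), gmulgV, gmul1g, gmulgV; reflexivity. }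
  transitivity (gmul (ginv (gmul a b)) (gmul (gmul a b) (gmul (ginv b) (ginv a)))).
  - rewrite H, gmulg1; reflexivity.
  - rewrite gmulA, gmulVg, gmul1g; reflexivity.
Qed.

Lemma gshift_cancel (G : Group) (b c a : G) :
  gmul (gmul b a) (ginv (gmul c a)) = gmul b (ginv c).
Proof.
  rewrite ginvM, <- gmulA, (gmulA a), gmulgV, gmul1g; reflexivity.
Qed.

(* A "magma with zero": carrier, multiplication and a distinguished zero.
   The semigroup axioms are imposed separately by [is_semigroup0]. *)
Record Magma0 := { mcar :> Type; mmul : mcar -> mcar -> mcar; mzero : mcar }.
Arguments mmul {m}. Arguments mzero : clear implicits.

Definition is_semigroup0 (S : Magma0) : Prop :=
  (forall a b c : S, mmul a (mmul b c) = mmul (mmul a b) c) /\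
  (forall a : S, mmul (mzero S) a = mzero S) /\
  (forall a : S, mmul a (mzero S) = mzero S).

(* S is Gamma-graded by deg (the value of deg at 0 is irrelevant) *)
Definition is_graded (G : Group) (S : Magma0) (deg : S -> G) : Prop :=
  forall s t : S, mmul s t <> mzero S -> deg (mmul s t) = gmul (deg s) (deg t).

Definition in_grade (G : Group) (S : Magma0) (deg : S -> G) (a : G) (t : S) : Prop :=
  t = mzero S \/ deg t = a.

Definition has_local_units (S : Magma0) : Prop :=
  forall s : S, exists u v : S,
    mmul u u = u /\ mmul v v = v /\ mmul u s = s /\ mmul s v = s.

Record LSet (T : Magma0) := {
  lcar :> Type;
  lact : T -> lcar -> lcar;
  lpt : lcar;
  lact_assoc : forall (s t : T) (x : lcar), lact s (lact t x) = lact (mmul s t) x;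
  lact_zero : forall x : lcar, lact (mzero T) x = lpt;
  lunital : forall x : lcar, exists (s : T) (y : lcar), x = lact s y }.
Arguments lact {T} l. Arguments lpt {T} l.

Definition is_Tmap (T : Magma0) (X Y : LSet T) (f : X -> Y) : Prop :=
  forall (s : T) (x : X), f (lact X s x) = lact Y s (f x).

Record Cat := {
  Ob : Type;
  Hom : Ob -> Ob -> Type;
  idm : forall X, Hom X X;
  cmp : forall X Y Z, Hom Y Z -> Hom X Y -> Hom X Z }.
Arguments Hom : clear implicits. Arguments idm {c} X. Arguments cmp {c X Y Z}.

Record Functor (C D : Cat) := {
  fobj : Ob C -> Ob D;
  fmap : forall X Y, Hom C X Y -> Hom D (fobj X) (fobj Y);
  fmap_id : forall X, fmap (idm X) = idm (fobj X);
  fmap_cmp : forall X Y Z (g : Hom C Y Z) (f : Hom C X Y),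
      fmap (cmp g f) = cmp (fmap g) (fmap f) }.
Arguments fobj {C D} _ _. Arguments fmap {C D} _ {X Y} _.

Definition Fid (C : Cat) : Functor C C.
Proof.
  refine {| fobj := fun X => X; fmap := fun X Y f => f |}; reflexivity.
Defined.

Definition Fcomp (C D E : Cat) (G : Functor D E) (F : Functor C D) : Functor C E.
Proof.
  refine {| fobj := fun X => fobj G (fobj F X);
            fmap := fun X Y f => fmap G (fmap F f) |}.
  - intro X; rewrite fmap_id, fmap_id; reflexivity.
  - intros; rewrite fmap_cmp, fmap_cmp; reflexivity.
Defined.

Definition is_iso_of_cats (C D : Cat) (F : Functor C D) : Prop :=
  exists G : Functor D C, Fcomp G F = Fid C /\ Fcomp F G = Fid D.

Lemma sig_eq (A : Type) (P : A -> Prop) (x y : sig P) :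
  proj1_sig x = proj1_sig y -> x = y.
Proof.
  destruct x as [x Hx], y as [y Hy]; simpl; intros ->.
  f_equal; apply proof_irrelevance.
Qed.

Definition ModCat (T : Magma0) : Cat.
Proof.
  refine {| Ob := LSet T;
            Hom := fun X Y => {f : X -> Y | is_Tmap f};
            idm := fun X => exist _ (fun x => x) _;
            cmp := fun X Y Z g f =>
                     exist _ (fun x => proj1_sig g (proj1_sig f x)) _ |}.
  - intros s x; reflexivity.
  - intros s x; rewrite (proj2_sig f), (proj2_sig g); reflexivity.
Defined.

Section Graded.
Variables (G : Group) (S : Magma0) (deg : S -> G).

Record GrSet := {
  gset :> LSet S;
  gdeg : gset -> option G;
  gdeg_pt : forall x, gdeg x = None <-> x = lpt gset;
  gdeg_act : forall (s : S) (x : gset) (b : G), lact gset s x <> lpt gset ->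
      gdeg x = Some b -> gdeg (lact gset s x) = Some (gmul (deg s) b) }.
Arguments gdeg : clear implicits.

Definition gpart (X : GrSet) (a : G) (x : X) : Prop :=
  x = lpt X \/ gdeg X x = Some a.
Arguments gpart : clear implicits.

Definition is_graded_map (X Y : GrSet) (f : X -> Y) : Prop :=
  forall (a : G) (x : X), gpart X a x -> gpart Y a (f x).

Definition GrCat : Cat.
Proof.
  refine {| Ob := GrSet;
            Hom := fun X Y => {f : X -> Y | is_Tmap f /\ is_graded_map f};
            idm := fun X => exist _ (fun x => x) _;
            cmp := fun X Y Z g f =>
                     exist _ (fun x => proj1_sig g (proj1_sig f x)) _ |}.
  - split; intros ? ?; auto.
  - destruct f as [f [f1 f2]], g as [g [g1 g2]]; simpl; split.
    + intros s x; rewrite f1, g1; reflexivity.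
    + intros a x Hx; auto.
Defined.

(* shift X(alpha): X(alpha)_b = X_{b alpha}, i.e. new degree = deg * alpha^-1 *)
Definition shift_gr (a : G) (X : GrSet) : GrSet.
Proof.
  refine {| gset := gset X;
            gdeg := fun x => option_map (fun g => gmul g (ginv a)) (gdeg X x) |}.
  - intro x; rewrite <- gdeg_pt; destruct (gdeg X x); simpl; split;
      congruence.
  - intros s x b Hne Hx.
    destruct (gdeg X x) as [c|] eqn:E; simpl in Hx; [|discriminate].
    injection Hx as <-.
    rewrite (gdeg_act Hne E); simpl; rewrite gmulA; reflexivity.
Defined.

Lemma shift_gr_map (a : G) (X Y : GrSet) (f : X -> Y) :
  is_Tmap f /\ is_graded_map f ->
  @is_Tmap S (shift_gr a X) (shift_gr a Y) f /\
  @is_graded_map (shift_gr a X) (shift_gr a Y) f.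
Proof.
  intros [H1 H2]; split; [exact H1|].
  intros b x Hx; unfold gpart in *; simpl in *.
  assert (Hx' : gpart X (gmul b a) x).
  { destruct Hx as [Hx|Hx]; [left; exact Hx|right].
    destruct (gdeg X x) as [c|] eqn:E; simpl in Hx; [|discriminate].
    injection Hx as <-. rewrite <- gmulA, gmulVg, gmulg1; reflexivity. }
  destruct (H2 _ _ Hx') as [H|H]; [left; exact H|right].
  rewrite H; simpl; rewrite <- gmulA, gmulgV, gmulg1; reflexivity.
Qed.

Definition ShiftGr (a : G) : Functor GrCat GrCat.
Proof.
  refine {| fobj := (shift_gr a : Ob GrCat -> Ob GrCat);
            fmap := fun X Y f => exist _ (proj1_sig f) (shift_gr_map a (proj2_sig f)) |};
  intros; apply sig_eq; reflexivity.
Defined.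

(* Some (s, a) (with s <> 0) stands for s P_a; None is the zero *)
Definition smash_car : Type := option {p : S * G | fst p <> mzero S}.

Definition smash_mul (x y : smash_car) : smash_car :=
  match x, y with
  | Some p, Some q =>
      match excluded_middle_informative
              (mmul (fst (proj1_sig p)) (fst (proj1_sig q)) <> mzero S /\
               in_grade deg (gmul (snd (proj1_sig p)) (ginv (snd (proj1_sig q))))
                        (fst (proj1_sig q))) with
      | left H => Some (exist (fun r : S * G => fst r <> mzero S)
                          (mmul (fst (proj1_sig p)) (fst (proj1_sig q)),
                           snd (proj1_sig q)) (proj1 H))
      | right _ => None
      end
  | _, _ => None
  end.

Definition Smash : Magma0 := {| mcar := smash_car; mmul := smash_mul; mzero := None |}.

Definition shift_el (a : G) (x : smash_car) : smash_car :=
  match x with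
  | Some (exist _ q Hq) =>
      Some (exist (fun r : S * G => fst r <> mzero S) (fst q, gmul (snd q) a) Hq)
  | None => None
  end.

Lemma shift_el_mul (a : G) (x y : smash_car) :
  shift_el a (smash_mul x y) = smash_mul (shift_el a x) (shift_el a y).
Proof.
  destruct x as [[[s b] Hs]|], y as [[[t c] Ht]|]; try reflexivity.
  unfold smash_mul; simpl.
  rewrite gshift_cancel.
  destruct (excluded_middle_informative _); simpl; [|reflexivity].
  f_equal; apply sig_eq; reflexivity.
Qed.

Lemma shift_el_inv (a : G) (x : smash_car) :
  shift_el a (shift_el (ginv a) x) = x.
Proof.
  destruct x as [[[s b] Hs]|]; simpl; [|reflexivity].
  f_equal; apply sig_eq; simpl.
  rewrite <- gmulA, gmulVg, gmulg1; reflexivity.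
Qed.

Definition shift_mod (a : G) (X : LSet Smash) : LSet Smash.
Proof.
  refine {| lcar := lcar X;
            lact := fun (u : Smash) x => lact X (shift_el a u) x;
            lpt := lpt X |}.
  - intros s t x; rewrite lact_assoc; simpl; rewrite shift_el_mul; reflexivity.
  - intro x; apply (@lact_zero _ X).
  - intro x; destruct (@lunital _ X x) as [s [y ->]].
    exists (shift_el (ginv a) s), y; rewrite shift_el_inv; reflexivity.
Defined.

Definition ShiftMod (a : G) : Functor (ModCat Smash) (ModCat Smash).
Proof.
  refine {| fobj := (shift_mod a : Ob (ModCat Smash) -> Ob (ModCat Smash));
            fmap := fun X Y f =>
              exist (fun g : shift_mod a X -> shift_mod a Y => is_Tmap g)
                    (proj1_sig f) (fun s x => proj2_sig f (shift_el a s) x) |};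
  intros; apply sig_eq; reflexivity.
Defined.

End Graded.

(* Main.v *)
Require Import Defs.
From Stdlib Require Import ClassicalEpsilon ClassicalDescription ProofIrrelevance FunctionalExtensionality Classical.
Set Implicit Arguments.
Unset Strict Implicit.


Lemma functor_eq (C D : Cat) (car : Ob D -> Type)
  (hf : forall X Y, Hom D X Y -> car X -> car Y)
  (hf_inj : forall X Y (f g : Hom D X Y), hf X Y f = hf X Y g -> f = g)
  (F1 F2 : Functor C D) (e : forall X, fobj F1 X = fobj F2 X)
  (hc : forall X, car (fobj F1 X) = car (fobj F2 X))
  (H : forall X Y (f : Hom C X Y) (x : car (fobj F1 X)),
     hf _ _ (fmap F2 f) (eq_rect _ (fun T => T) x _ (hc X)) =
     eq_rect _ (fun T => T) (hf _ _ (fmap F1 f) x) _ (hc Y)) : F1 = F2.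
Proof.
  destruct F1 as [o1 m1 i1 c1], F2 as [o2 m2 i2 c2]; simpl in *.
  assert (o1 = o2) by (apply functional_extensionality; exact e). subst o2.
  assert (m1 = m2).
  { apply functional_extensionality_dep; intro X.
    apply functional_extensionality_dep; intro Y.
    apply functional_extensionality_dep; intro f.
    apply hf_inj. apply functional_extensionality; intro x.
    specialize (H X Y f x).
    rewrite (proof_irrelevance _ (hc X) eq_refl), (proof_irrelevance _ (hc Y) eq_refl) in H.
    simpl in H. symmetry; exact H. }
  subst m2.
  rewrite (proof_irrelevance _ i1 i2), (proof_irrelevance _ c1 c2); reflexivity.
Qed.

Lemma LSet_eq (T : Magma0) (A : Type) (act1 act2 : T -> A -> A) (pt1 pt2 : A)
  a1 z1 u1 a2 z2 u2 :
  act1 = act2 -> pt1 = pt2 ->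
  @Build_LSet T A act1 pt1 a1 z1 u1 = @Build_LSet T A act2 pt2 a2 z2 u2.
Proof.
  intros; subst.
  rewrite (proof_irrelevance _ a1 a2), (proof_irrelevance _ z1 z2),
          (proof_irrelevance _ u1 u2); reflexivity.
Qed.

Lemma GrSet_eq (G : Group) (S : Magma0) (deg : S -> G) (A : Type)
  (act1 act2 : S -> A -> A) (pt1 pt2 : A) a1 z1 u1 a2 z2 u2 d1 d2 p1 q1 p2 q2 :
  act1 = act2 -> pt1 = pt2 -> d1 = d2 ->
  @Build_GrSet G S deg (@Build_LSet S A act1 pt1 a1 z1 u1) d1 p1 q1 =
  @Build_GrSet G S deg (@Build_LSet S A act2 pt2 a2 z2 u2) d2 p2 q2.
Proof.
  intros; subst.
  assert (a1 = a2) by apply proof_irrelevance; subst.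
  assert (z1 = z2) by apply proof_irrelevance; subst.
  assert (u1 = u2) by apply proof_irrelevance; subst.
  rewrite (proof_irrelevance _ p1 p2), (proof_irrelevance _ q1 q2); reflexivity.
Qed.

Section Main.
Variables (G : Group) (S : Magma0) (deg : S -> G).
Hypothesis HS : is_semigroup0 S.
Hypothesis Hdeg : is_graded deg.
Hypothesis Hlu : has_local_units S.

Notation SM := (Smash deg).
Notation z := (mzero S).

Definition sm (s : S) (b : G) (H : s <> z) : SM :=
  Some (exist (fun r : S * G => fst r <> z) (s, b) H).

Arguments sm : clear implicits.
Lemma sm_pi s b H1 H2 : sm s b H1 = sm s b H2.
Proof. rewrite (proof_irrelevance _ H1 H2); reflexivity. Qed.

Lemma mulA (a b c : S) : mmul a (mmul b c) = mmul (mmul a b) c.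
Proof. apply (proj1 HS). Qed.
Lemma mul0s (a : S) : mmul z a = z.
Proof. apply (proj1 (proj2 HS)). Qed.
Lemma muls0 (a : S) : mmul a z = z.
Proof. apply (proj2 (proj2 HS)). Qed.

Lemma smash_mul_ok s a Hs t b Ht (H : mmul s t <> z) :
  deg t = gmul a (ginv b) ->
  @mmul SM (sm s a Hs) (sm t b Ht) = sm (mmul s t) b H.
Proof.
  intro Hd. unfold smash_mul, sm; simpl.
  destruct (excluded_middle_informative _) as [H'|H'].
  - apply sm_pi.
  - exfalso; apply H'; split; [exact H| right; exact Hd].
Qed.

Lemma smash_mul_bad s a Hs t b Ht :
  @mmul SM (sm s a Hs) (sm t b Ht) <> None ->
  mmul s t <> z /\ deg t = gmul a (ginv b).
Proof.
  unfold smash_mul, sm; simpl.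
  destruct (excluded_middle_informative _) as [[H1 [H2|H2]]|H']; intro HH.
  - contradiction.
  - auto.
  - congruence.
Qed.

Lemma smash_mul_None_r (u : SM) : @mmul SM u (None : mcar SM) = None.
Proof. destruct u; reflexivity. Qed.

Lemma galg1 (x a b : G) : x = gmul a (ginv b) -> a = gmul x b.
Proof. intros ->. rewrite <- gmulA, gmulVg, gmulg1; reflexivity. Qed.
Lemma galg2 (x b : G) : x = gmul (gmul x b) (ginv b).
Proof. rewrite <- gmulA, gmulgV, gmulg1; reflexivity. Qed.

Section ModToGr.
Variable Y : LSet SM.

Lemma Ypt_act (u : SM) : lact Y u (lpt Y) = lpt Y.
Proof.
  transitivity (lact Y u (lact Y None (lpt Y))).
  - f_equal; symmetry; apply (@lact_zero _ Y).
  - rewrite (@lact_assoc _ Y). rewrite smash_mul_None_r. apply (@lact_zero _ Y).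
Qed.

Lemma Ynone (x : Y) : lact Y None x = lpt Y.
Proof. apply (@lact_zero _ Y). Qed.

Lemma Ydecomp (y : Y) : y <> lpt Y ->
  exists s a Hs w, y = lact Y (sm s a Hs) w.
Proof.
  intro Hy. destruct (@lunital _ Y y) as [u [w Hw]].
  destruct u as [[[s a] Hs]|].
  - exists s, a, Hs, w; exact Hw.
  - exfalso; apply Hy; rewrite Hw; apply Ynone.
Qed.

Lemma LU s a Hs w t b Ht :
  lact Y (sm t b Ht) (lact Y (sm s a Hs) w) <> lpt Y -> b = gmul (deg s) a.
Proof.
  rewrite lact_assoc. intro H.
  destruct (classic (@mmul SM (sm t b Ht) (sm s a Hs) = None)) as [E|E].
  - rewrite E in H. exfalso; apply H, Ynone.
  - apply smash_mul_bad in E. apply galg1, (proj2 E).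
Qed.

Lemma LK (y : Y) s a Hs t b Ht :
  lact Y (sm s a Hs) y <> lpt Y -> lact Y (sm t b Ht) y <> lpt Y -> a = b.
Proof.
  intros H1 H2.
  assert (Hy : y <> lpt Y) by (intro E; subst; apply H1, Ypt_act).
  destruct (Ydecomp Hy) as [r [c [Hr [w ->]]]].
  rewrite (LU H1), (LU H2); reflexivity.
Qed.

Definition has_deg (y : Y) (b : G) : Prop :=
  y <> lpt Y /\ exists t Ht, lact Y (sm t b Ht) y = y.

Lemma has_deg_uniq y b c : has_deg y b -> has_deg y c -> b = c.
Proof.
  intros [Hy [t [Ht E1]]] [_ [t' [Ht' E2]]].
  apply (@LK y t b Ht t' c Ht'); congruence.
Qed.

Definition gdY (y : Y) : option G :=
  match excluded_middle_informative (exists b, has_deg y b) with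
  | left H => Some (proj1_sig (constructive_indefinite_description _ H))
  | right _ => None
  end.

Lemma gdY_spec y b : has_deg y b -> gdY y = Some b.
Proof.
  intro Hb. unfold gdY. destruct (excluded_middle_informative _) as [H|H].
  - destruct (constructive_indefinite_description _ H) as [c Hc]; simpl.
    f_equal; apply (has_deg_uniq Hc Hb).
  - exfalso; apply H; exists b; exact Hb.
Qed.

Lemma gdY_some y b : gdY y = Some b -> has_deg y b.
Proof.
  unfold gdY. destruct (excluded_middle_informative _) as [H|H]; [|discriminate].
  destruct (constructive_indefinite_description _ H) as [c Hc]; simpl.
  intro E; injection E as <-; exact Hc.
Qed.

Lemma L1 t b Ht (w : Y) : lact Y (sm t b Ht) w <> lpt Y ->
  gdY (lact Y (sm t b Ht) w) = Some (gmul (deg t) b).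
Proof.
  intro H. apply gdY_spec. split; [exact H|].
  destruct (Hlu t) as [u [v [_ [_ [Hut _]]]]].
  assert (Hu : u <> z) by (intro E; subst; apply Ht; rewrite <- Hut; apply mul0s).
  exists u, Hu. rewrite lact_assoc.
  assert (Hne : mmul u t <> z) by (rewrite Hut; exact Ht).
  rewrite (@smash_mul_ok u (gmul (deg t) b) Hu t b Ht Hne).
  - assert (E : sm (mmul u t) b Hne = sm t b Ht) by (revert Hne; rewrite Hut; intro; apply sm_pi).
    rewrite E; reflexivity.
  - apply galg2.
Qed.

Lemma gdY_none y : gdY y = None <-> y = lpt Y.
Proof.
  split.
  - intro H. destruct (classic (y = lpt Y)) as [E|E]; [exact E|exfalso].
    destruct (Ydecomp E) as [s [a [Hs [w Hw]]]].
    subst y. rewrite L1 in H; [discriminate|]. exact E.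
  - intros ->. unfold gdY. destruct (excluded_middle_informative _) as [[b [H HH]]|H];
      [exfalso; apply H; reflexivity|reflexivity].
Qed.

Lemma act_ne s a Hs y : lact Y (sm s a Hs) y <> lpt Y -> gdY y = Some a.
Proof.
  intro H.
  assert (Hy : y <> lpt Y) by (intro E; subst; apply H, Ypt_act).
  destruct (gdY y) as [b|] eqn:E.
  - apply gdY_some in E as Hb. destruct Hb as [_ [t [Ht Et]]].
    f_equal. apply (@LK y t b Ht s a Hs); [rewrite Et; exact Hy| exact H].
  - apply gdY_none in E; contradiction.
Qed.


Definition mkS (s : S) (b : G) : SM :=
  match excluded_middle_informative (s = z) with
  | left _ => None
  | right H => sm s b H
  end.

Lemma mkS_sm s b H : mkS s b = sm s b H.
Proof.
  unfold mkS; destruct (excluded_middle_informative _); [contradiction|apply sm_pi].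
Qed.
Lemma mkS_0 s b : s = z -> mkS s b = None.
Proof. intro E; unfold mkS; destruct (excluded_middle_informative _); [reflexivity|contradiction]. Qed.

Lemma mkS_mul s t b Ht :
  @mmul SM (mkS s (gmul (deg t) b)) (sm t b Ht) = mkS (mmul s t) b.
Proof.
  destruct (classic (s = z)) as [Es|Es].
  - rewrite (mkS_0 _ Es), (mkS_0 b); [reflexivity|]. rewrite Es; apply mul0s.
  - rewrite (mkS_sm _ Es).
    destruct (classic (mmul s t = z)) as [Ez|Ez].
    + rewrite (mkS_0 b Ez).
      destruct (classic (@mmul SM (sm s (gmul (deg t) b) Es) (sm t b Ht) = None)) as [N|N];
        [exact N|].
      apply smash_mul_bad in N; tauto.
    + rewrite (mkS_sm b Ez). apply smash_mul_ok. apply galg2.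
Qed.

Definition actG (s : S) (y : Y) : Y :=
  match gdY y with
  | Some b => lact Y (mkS s b) y
  | None => lpt Y
  end.

Lemma gdY_pt : gdY (lpt Y) = None.
Proof. apply gdY_none; reflexivity. Qed.

Lemma actG_pt s : actG s (lpt Y) = lpt Y.
Proof. unfold actG; rewrite gdY_pt; reflexivity. Qed.

Lemma actG_assoc s t y : actG s (actG t y) = actG (mmul s t) y.
Proof.
  unfold actG at 2 3. destruct (gdY y) as [b|] eqn:Eb.
  - destruct (classic (t = z)) as [Et|Et].
    + rewrite (mkS_0 b Et), Ynone, actG_pt, mkS_0; [symmetry; apply Ynone|].
      rewrite Et; apply muls0.
    + rewrite (mkS_sm b Et), <- (mkS_mul s b Et), <- (@lact_assoc _ Y).
      destruct (classic (lact Y (sm t b Et) y = lpt Y)) as [E|E].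
      * rewrite E, actG_pt, Ypt_act; reflexivity.
      * unfold actG; rewrite (L1 E); reflexivity.
  - apply actG_pt.
Qed.

Lemma actG_zero y : actG z y = lpt Y.
Proof.
  unfold actG; destruct (gdY y); [|reflexivity].
  rewrite mkS_0; [apply Ynone|reflexivity].
Qed.

Lemma actG_unital y : exists s w, y = actG s w.
Proof.
  destruct (gdY y) as [b|] eqn:E.
  - apply gdY_some in E as Hb. destruct Hb as [_ [t [Ht Et]]].
    exists t, y. unfold actG; rewrite E, (mkS_sm b Ht), Et; reflexivity.
  - apply gdY_none in E. exists z, y. rewrite actG_zero; exact E.
Qed.

Definition GL : LSet S :=
  {| lcar := lcar Y; lact := actG; lpt := lpt Y;
     lact_assoc := actG_assoc; lact_zero := actG_zero; lunital := actG_unital |}.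

Lemma GL_deg_pt (y : GL) : gdY y = None <-> y = lpt GL.
Proof. apply gdY_none. Qed.

Lemma GL_deg_act (s : S) (y : GL) (b : G) : lact GL s y <> lpt GL ->
  gdY y = Some b -> gdY (lact GL s y) = Some (gmul (deg s) b).
Proof.
  simpl. unfold actG. intros H E. rewrite E in *.
  destruct (classic (s = z)) as [Es|Es].
  - rewrite (mkS_0 b Es) in H. exfalso; apply H, Ynone.
  - rewrite (mkS_sm b Es) in *. apply L1; exact H.
Qed.

Definition GY : @GrSet G S deg := @Build_GrSet G S deg GL gdY GL_deg_pt GL_deg_act.
End ModToGr.

Section GrToMod.
Variable X : @GrSet G S deg.
Notation gd := (@gdeg G S deg X).

Lemma Xpt_act (s : S) : lact X s (lpt X) = lpt X.
Proof.
  transitivity (lact X s (lact X z (lpt X))).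
  - f_equal; symmetry; apply (@lact_zero _ X).
  - rewrite (@lact_assoc _ X), muls0. apply (@lact_zero _ X).
Qed.

Lemma Xdeg_pt : gd (lpt X) = None.
Proof. apply (@gdeg_pt _ _ _ X); reflexivity. Qed.

Definition actF (u : SM) (x : X) : X :=
  match u with
  | Some p => if excluded_middle_informative (gd x = Some (snd (proj1_sig p)))
              then lact X (fst (proj1_sig p)) x else lpt X
  | None => lpt X
  end.

Lemma actF_pt u : actF u (lpt X) = lpt X.
Proof.
  destruct u as [p|]; [|reflexivity]. simpl.
  destruct (excluded_middle_informative _) as [E|E]; [|reflexivity].
  rewrite Xdeg_pt in E; discriminate.
Qed.

Lemma actF_sm s a Hs x : actF (sm s a Hs) x =
  if excluded_middle_informative (gd x = Some a) then lact X s x else lpt X.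
Proof. reflexivity. Qed.

Lemma actF_assoc (u v : SM) (x : X) : actF u (actF v x) = actF (mmul u v) x.
Proof.
  destruct u as [[[s a] Hs]|]; [|reflexivity].
  destruct v as [[[t b] Ht]|]; [|apply actF_pt].
  change (Some (exist (fun r : S * G => fst r <> z) (s, a) Hs)) with (sm s a Hs).
  change (Some (exist (fun r : S * G => fst r <> z) (t, b) Ht)) with (sm t b Ht).
  simpl actF at 2.
  destruct (excluded_middle_informative (gd x = Some b)) as [Hx|Hx].
  - destruct (classic (lact X t x = lpt X)) as [E|E].
    + rewrite E, actF_pt.
      destruct (classic (@mmul SM (sm s a Hs) (sm t b Ht) = None)) as [N|N].
      * rewrite N; reflexivity.
      * destruct (smash_mul_bad N) as [Hn Hd]. rewrite (@smash_mul_ok s a Hs t b Ht Hn Hd).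
        simpl. destruct (excluded_middle_informative _); [|reflexivity].
        rewrite <- (@lact_assoc _ X), E; symmetry; apply Xpt_act.
    + pose proof (@gdeg_act _ _ _ X _ _ _ E Hx) as Etx.
      rewrite actF_sm, Etx.
      destruct (excluded_middle_informative (Some (gmul (deg t) b) = Some a)) as [Ea|Ea].
      * injection Ea as Ea.
        assert (Hd : deg t = gmul a (ginv b)) by (rewrite <- Ea; apply galg2).
        destruct (classic (mmul s t = z)) as [Ez|Ez].
        -- destruct (classic (@mmul SM (sm s a Hs) (sm t b Ht) = None)) as [N|N].
           ++ rewrite N; simpl. rewrite (@lact_assoc _ X), Ez; apply (@lact_zero _ X).
           ++ destruct (smash_mul_bad N); contradiction.
        -- rewrite (@smash_mul_ok s a Hs t b Ht Ez Hd). simpl.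
           destruct (excluded_middle_informative _); [|contradiction].
           apply (@lact_assoc _ X).
      * destruct (classic (@mmul SM (sm s a Hs) (sm t b Ht) = None)) as [N|N].
        -- rewrite N; reflexivity.
        -- destruct (smash_mul_bad N) as [_ Hd]. exfalso; apply Ea.
           rewrite Hd, <- gmulA, gmulVg, gmulg1; reflexivity.
  - rewrite actF_pt.
    destruct (classic (@mmul SM (sm s a Hs) (sm t b Ht) = None)) as [N|N].
    + rewrite N; reflexivity.
    + destruct (smash_mul_bad N) as [Hn Hd]. rewrite (@smash_mul_ok s a Hs t b Ht Hn Hd).
      simpl. destruct (excluded_middle_informative _); [contradiction|reflexivity].
Qed.

Lemma actF_zero (x : X) : actF (mzero SM) x = lpt X.
Proof. reflexivity. Qed.

Lemma actF_unital (x : X) : exists u w, x = actF u w.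
Proof.
  destruct (classic (x = lpt X)) as [E|E].
  - exists (None : SM), x; exact E.
  - destruct (@lunital _ X x) as [s [y Hy]].
    destruct (Hlu s) as [u [v [_ [_ [Hus _]]]]].
    assert (Hux : lact X u x = x) by (rewrite Hy, (@lact_assoc _ X), Hus; reflexivity).
    assert (Hu : u <> z).
    { intro Eu; apply E; rewrite <- Hux, Eu; apply (@lact_zero _ X). }
    destruct (gd x) as [b|] eqn:Eb.
    + exists (sm u b Hu), x. simpl.
      destruct (excluded_middle_informative _) as [_|N]; [symmetry; exact Hux|contradiction].
    + apply (@gdeg_pt _ _ _ X) in Eb; contradiction.
Qed.

Definition FL : LSet SM :=
  {| lcar := lcar (gset X); lact := actF; lpt := lpt X;
     lact_assoc := actF_assoc; lact_zero := actF_zero; lunital := actF_unital |}.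

End GrToMod.

Lemma F_map (X1 X2 : @GrSet G S deg) (f : X1 -> X2) :
  is_Tmap f /\ is_graded_map f -> @is_Tmap SM (FL X1) (FL X2) f.
Proof.
  intros [H1 H2].
  assert (Hpt : f (lpt X1) = lpt X2).
  { rewrite <- (@lact_zero _ X1 (lpt X1)), H1. apply (@lact_zero _ X2). }
  intros u x. destruct u as [[[s a] Hs]|]; [|exact Hpt].
  change (Some (exist (fun r : S * G => fst r <> z) (s, a) Hs)) with (sm s a Hs).
  simpl lact.
  destruct (excluded_middle_informative (@gdeg G S deg X1 x = Some a)) as [E|E].
  - destruct (H2 a x (or_intror E)) as [E'|E'].
    + rewrite H1, E'. destruct (excluded_middle_informative _) as [_|_];
        [reflexivity|apply Xpt_act].
    + destruct (excluded_middle_informative _) as [_|N]; [apply H1|contradiction].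
  - rewrite Hpt. destruct (excluded_middle_informative _) as [E'|_]; [|reflexivity].
    exfalso.
    destruct (@gdeg G S deg X1 x) as [c|] eqn:Ec.
    + destruct (H2 c x (or_intror Ec)) as [E2|E2].
      * rewrite E2, Xdeg_pt in E'; discriminate.
      * rewrite E2 in E'. injection E' as ->. contradiction.
    + apply (@gdeg_pt _ _ _ X1) in Ec. subst x. rewrite Hpt, Xdeg_pt in E'; discriminate.
Qed.

Definition Ffun : Functor (GrCat deg) (ModCat SM).
Proof.
  refine {| fobj := (FL : Ob (GrCat deg) -> Ob (ModCat SM));
            fmap := fun X Y f => exist (fun g : FL X -> FL Y => is_Tmap g)
                                   (proj1_sig f) (F_map (proj2_sig f)) |};
  intros; apply sig_eq; reflexivity.
Defined.

Lemma G_deg_map (Y1 Y2 : LSet SM) (f : Y1 -> Y2) (Hf : is_Tmap f) (y : Y1) b :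
  gdY y = Some b -> f y = lpt Y2 \/ gdY (f y) = Some b.
Proof.
  intro E. apply gdY_some in E. destruct E as [Hy [t [Ht Et]]].
  destruct (classic (f y = lpt Y2)) as [N|N]; [left; exact N|right].
  apply gdY_spec. split; [exact N|]. exists t, Ht. rewrite <- Hf, Et; reflexivity.
Qed.

Lemma G_map (Y1 Y2 : LSet SM) (f : Y1 -> Y2) :
  is_Tmap f -> @is_Tmap S (GL Y1) (GL Y2) f /\ @is_graded_map G S deg (GY Y1) (GY Y2) f.
Proof.
  intro Hf.
  assert (Hpt : f (lpt Y1) = lpt Y2).
  { rewrite <- (@lact_zero _ Y1 (lpt Y1)), Hf. apply (@lact_zero _ Y2). }
  split.
  - intros s y. simpl. unfold actG at 1.
    destruct (gdY y) as [b|] eqn:E.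
    + rewrite Hf. destruct (G_deg_map Hf E) as [E'|E'].
      * rewrite E', Ypt_act, actG_pt; reflexivity.
      * unfold actG; rewrite E'; reflexivity.
    + apply gdY_none in E. subst y. rewrite Hpt, actG_pt; reflexivity.
  - intros a y [E|E].
    + left. simpl in E |- *. rewrite E; exact Hpt.
    + exact (G_deg_map Hf E).
Qed.

Definition Gfun : Functor (ModCat SM) (GrCat deg).
Proof.
  refine {| fobj := (GY : Ob (ModCat SM) -> Ob (GrCat deg));
            fmap := fun X Y f => exist (fun g : GY X -> GY Y => is_Tmap g /\ is_graded_map g)
                                   (proj1_sig f) (G_map (proj2_sig f)) |};
  intros; apply sig_eq; reflexivity.
Defined.

Lemma gdY_FL (X : @GrSet G S deg) (x : X) : @gdY (FL X) x = @gdeg G S deg X x.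
Proof.
  destruct (@gdeg G S deg X x) as [b|] eqn:Eb.
  - apply gdY_spec. 
    assert (Hx : x <> lpt X) by (intro E; subst; rewrite Xdeg_pt in Eb; discriminate).
    split; [exact Hx|].
    destruct (@lunital _ X x) as [s [y Hy]].
    destruct (Hlu s) as [u [v [_ [_ [Hus _]]]]].
    assert (Hux : lact X u x = x) by (rewrite Hy, (@lact_assoc _ X), Hus; reflexivity).
    assert (Hu : u <> z).
    { intro Eu; apply Hx; rewrite <- Hux, Eu; apply (@lact_zero _ X). }
    exists u, Hu. simpl. 
    destruct (excluded_middle_informative _) as [_|N]; [exact Hux|contradiction].
  - apply gdY_none. apply (@gdeg_pt _ _ _ X) in Eb. exact Eb.
Qed.

Lemma actG_FL (X : @GrSet G S deg) s (x : X) : @actG (FL X) s x = lact X s x.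
Proof.
  unfold actG. rewrite gdY_FL.
  destruct (@gdeg G S deg X x) as [b|] eqn:Eb.
  - destruct (classic (s = z)) as [Es|Es].
    + rewrite (mkS_0 b Es), Es. symmetry; apply (@lact_zero _ X).
    + rewrite (mkS_sm b Es). simpl.
      destruct (excluded_middle_informative _) as [_|N]; [reflexivity|contradiction].
  - apply (@gdeg_pt _ _ _ X) in Eb. subst x. symmetry; apply Xpt_act.
Qed.

Lemma GF_obj (X : @GrSet G S deg) : GY (FL X) = X.
Proof.
  pose proof (@gdY_FL X) as H1. pose proof (@actG_FL X) as H2. revert H1 H2.
  destruct X as [[A act pt a0 z0 u0] d p q]. intros H1 H2.
  apply GrSet_eq.
  - apply functional_extensionality; intro s; apply functional_extensionality; intro x.
    apply H2.
  - reflexivity.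
  - apply functional_extensionality; intro x; apply H1.
Qed.

Lemma FG_act (Y : LSet SM) (u : SM) (y : Y) : @actF (GY Y) u y = lact Y u y.
Proof.
  destruct u as [[[s a] Hs]|].
  - change (Some (exist (fun r : S * G => fst r <> z) (s, a) Hs)) with (sm s a Hs).
    rewrite actF_sm. simpl.
    destruct (excluded_middle_informative _) as [E|E].
    + unfold actG. rewrite E. rewrite (@mkS_sm s a Hs). reflexivity.
    + destruct (classic (lact Y (sm s a Hs) y = lpt Y)) as [N|N]; [symmetry; exact N|].
      exfalso; apply E, (act_ne N).
  - symmetry; apply Ynone.
Qed.

Lemma FG_obj (Y : LSet SM) : FL (GY Y) = Y.
Proof.
  pose proof (@FG_act Y) as H. revert H.
  destruct Y as [A act pt a0 z0 u0]. intro H.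
  apply LSet_eq; [|reflexivity].
  apply functional_extensionality; intro u; apply functional_extensionality; intro y.
  apply H.
Qed.

Lemma shift_act (a : G) (X : @GrSet G S deg) (u : SM) (x : X) :
  @actF X (shift_el a u) x = @actF (shift_gr a X) u x.
Proof.
  destruct u as [[[s b] Hs]|]; [|reflexivity].
  change (shift_el a (Some (exist (fun r : S * G => fst r <> z) (s, b) Hs)))
    with (sm s (gmul b a) Hs).
  change (Some (exist (fun r : S * G => fst r <> z) (s, b) Hs)) with (sm s b Hs).
  rewrite !actF_sm. simpl.
  destruct (excluded_middle_informative _) as [E1|E1];
  destruct (excluded_middle_informative _) as [E2|E2]; try reflexivity; exfalso.
  - apply E2. rewrite E1. simpl. rewrite <- gmulA, gmulgV, gmulg1; reflexivity.
  - apply E1. destruct (@gdeg G S deg X x) as [c|]; simpl in E2; [|discriminate].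
    injection E2 as <-. rewrite <- gmulA, gmulVg, gmulg1; reflexivity.
Qed.

Lemma shift_obj (a : G) (X : @GrSet G S deg) :
  shift_mod a (FL X) = FL (shift_gr a X).
Proof.
  pose proof (@shift_act a X) as H. revert H.
  destruct X as [[A act pt a0 z0 u0] d p q]. intro H.
  apply LSet_eq; [|reflexivity].
  apply functional_extensionality; intro u; apply functional_extensionality; intro y.
  apply H.
Qed.

Lemma main_result :
  exists F : Functor (GrCat deg) (ModCat (Smash deg)),
    is_iso_of_cats F /\
    forall a : G, Fcomp (ShiftMod deg a) F = Fcomp F (ShiftGr deg a).
Proof.
  exists Ffun. split.
  - exists Gfun. split.
    + apply (@functor_eq (GrCat deg) (GrCat deg) (fun X => lcar (gset X))
               (fun X Y f => proj1_sig f) (fun X Y f g H => sig_eq H)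
               (Fcomp Gfun Ffun) (Fid _) GF_obj (fun X => eq_refl)).
      intros; reflexivity.
    + apply (@functor_eq (ModCat SM) (ModCat SM) (fun X => lcar X)
               (fun X Y f => proj1_sig f) (fun X Y f g H => sig_eq H)
               (Fcomp Ffun Gfun) (Fid _) FG_obj (fun X => eq_refl)).
      intros; reflexivity.
  - intro a.
    apply (@functor_eq (GrCat deg) (ModCat SM) (fun X => lcar X)
             (fun X Y f => proj1_sig f) (fun X Y f g H => sig_eq H)
             (Fcomp (ShiftMod deg a) Ffun) (Fcomp Ffun (ShiftGr deg a)) (shift_obj a) (fun X => eq_refl)).
    intros; reflexivity.
Qed.
End Main.

Theorem theorem3p5 (G : Group) (S : Magma0) (deg : S -> G)
  (HS : is_semigroup0 S) (Hdeg : is_graded deg) (Hlu : has_local_units S) :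
  exists F : Functor (GrCat deg) (ModCat (Smash deg)),
    is_iso_of_cats F /\
    forall a : G, Fcomp (ShiftMod deg a) F = Fcomp F (ShiftGr deg a).
Proof.
  exact (@main_result G S deg HS Hlu).
Qed.
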